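(* Let $\mathcal{G}$ be the information-flow graph of a single-sender single-uniprior index-coding instance and fix any index code for it with encoding function $E$. For every receiver $i$ and every predecessor $j$ of $i$ in $\mathcal{G}$, the message $x_j$ is a function of $(E(x_1,\dots,x_n), x_i)$; i.e., receiver $i$ can decode the messages of all its predecessors.
   Context: Single-sender single-uniprior index coding: there are $n$ receivers and $n$ independent messages $x_1,\dots,x_n$; message $x_i$ consists of $q_i\ge 1$ bits, each independently uniformly distributed on $\{0,1\}$. A single sender knows all messages. Receiver $i$ knows $x_i$ a priori and requests a set $\mathcal{W}_i$ of messages with $x_i\notin\mathcal{W}_i$. The information-flow graph is the directed graph $\mathcal{G}=(\mathcal{V},\mathcal{A})$ with $\mathcal{V}=\{1,\dots,n\}$ and an arc $(j\to i)\in\mathcal{A}$ iff $x_j\in\mathcal{W}_i$. An index code of length $\ell$ consists of an encoding function $E:\{0,1\}^{\sum_i q_i}\to\{0,1\}^\ell$ and, for each receiver $i$, a decoding function $D_i$ such that $D_i(E(x_1,\dots,x_n),x_i)$ equals the tuple of messages in $\mathcal{W}_i$ for all values of the messages. A vertex $j$ is a predecessor of vertex $i$ iff there is a directed path in $\mathcal{G}$ from $j$ to $i$. *)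

(* Defs.v *)
From mathcomp Require Import all_boot.
Set Implicit Arguments. Unset Strict Implicit. Unset Printing Implicit Defensive.

Definition messages (n : nat) (q : 'I_n -> nat) : Type :=
  forall i : 'I_n, (q i).-tuple bool.

Definition ifg_arc (n : nat) (W : 'I_n -> {set 'I_n}) : rel 'I_n :=
  fun j i => j \in W i.

Definition predecessor (n : nat) (W : 'I_n -> {set 'I_n}) (j i : 'I_n) : Prop :=
  exists2 p : seq 'I_n, path (ifg_arc W) j p & (p != [::]) && (last j p == i).

(* D i c y j is the component of the decoded tuple for message j
   (only components with j \in W i are constrained). *)
Definition is_index_code (n : nat) (q : 'I_n -> nat) (W : 'I_n -> {set 'I_n})
  (l : nat) (E : messages q -> l.-tuple bool)
  (D : forall i : 'I_n, l.-tuple bool -> (q i).-tuple bool ->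
         forall j : 'I_n, (q j).-tuple bool) : Prop :=
  forall (x : messages q) (i j : 'I_n), j \in W i -> D i (E x) (x i) j = x j.

(* Main.v *)
Require Import Defs.
From mathcomp Require Import all_boot.

Theorem lemma1 (n : nat) (q : 'I_n -> nat) (W : 'I_n -> {set 'I_n})
  (hq : forall i, 0 < q i) (huni : forall i, i \notin W i)
  (l : nat) (E : messages q -> l.-tuple bool)
  (D : forall i : 'I_n, l.-tuple bool -> (q i).-tuple bool ->
         forall j : 'I_n, (q j).-tuple bool)
  (hcode : is_index_code W E D) :
  forall i j : 'I_n, predecessor W j i ->
    exists f : l.-tuple bool -> (q i).-tuple bool -> (q j).-tuple bool,
      forall x : messages q, f (E x) (x i) = x j.
Proof.
move=> i j [p]; elim: p j => [|a p IH] j; first by move=> _ /andP [].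
move=> /= /andP [hja hp] hl.
case: p IH hp hl => [|b p] IH hp hl.
  move: hl => /= /eqP <-.
  exists (fun c y => D a c y j) => x; exact: hcode.
have [g hg] : exists g : l.-tuple bool -> (q i).-tuple bool -> (q a).-tuple bool, forall x : messages q, g (E x) (x i) = x a by apply: IH hp _; rewrite hl.
exists (fun c y => D a c (g c y) j) => x; rewrite hg; exact: hcode.
Qed.
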